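(* For every positive integer $n$, let $L_n(q)=\operatorname{lcm}\left({n\brack 0}_q,{n\brack 1}_q,\ldots,{n\brack n}_q\right)\in\mathbb{Z}[q]$. Then $$L_n(1)=\lim_{q\to1}L_n(q)=\operatorname{lcm}\left(\binom{n}{0},\binom{n}{1},\ldots,\binom{n}{n}\right).$$ *)

(* Defs.v *)
From HB Require Import structures.
From mathcomp Require Import all_boot all_order all_algebra.
Set Implicit Arguments. Unset Strict Implicit. Unset Printing Implicit Defensive.
Import Order.TTheory GRing.Theory Num.Theory.
Local Open Scope ring_scope.

Fixpoint qbinom (n k : nat) : {poly int} :=
  match n, k with
  | _, 0%N => 1
  | 0%N, _.+1 => 0
  | n'.+1, k'.+1 => qbinom n' k' + 'X^(k'.+1) * qbinom n' k
  end.

(* Divisibility in the ring Z[q] (genuine, not up to rational constants). *)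
Definition zpoly_dvd (p r : {poly int}) : Prop := exists s : {poly int}, r = p * s.

Definition is_qbinom_lcm (n : nat) (L : {poly int}) : Prop :=
  (forall k : 'I_n.+1, zpoly_dvd (qbinom n k) L) /\
  (forall M : {poly int}, (forall k : 'I_n.+1, zpoly_dvd (qbinom n k) M) ->
     zpoly_dvd L M).

Definition binom_lcm (n : nat) : nat := \big[lcmn/1%N]_(k < n.+1) 'C(n, k).

(* Main.v *)
Require Import Defs.
From HB Require Import structures.
From mathcomp Require Import all_boot all_order all_algebra all_field.
From Stdlib Require Import Lia.
Import Order.TTheory GRing.Theory Num.Theory.
Local Open Scope ring_scope.

Definition qf (m : nat) : {poly int} := \prod_(i < m) ('X^(i.+1) - 1).

Lemma qfS m : qf m.+1 = qf m * ('X^(m.+1) - 1).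
Proof. by rewrite /qf big_ord_recr. Qed.

Lemma qbinom_gt n k : (n < k)%N -> qbinom n k = 0.
Proof.
elim: n k => [|n IH] [|k] //= H.
by rewrite !IH ?mulr0 ?addr0 // ltnW.
Qed.

Lemma qbinom_n0 n : qbinom n 0 = 1.
Proof. by case: n. Qed.

Lemma QB n k : (k <= n)%N -> qbinom n k * (qf k * qf (n - k)) = qf n.
Proof.
elim: n k => [|n IH] [|k] //=.
- by move=> _; rewrite /qf !big_ord0 !mulr1.
- by move=> _; rewrite subn0 /qf big_ord0 !mul1r.
move=> Hk; rewrite subSS.
have T1 : qbinom n k * (qf k.+1 * qf (n - k)) = qf n * ('X^(k.+1) - 1).
  by rewrite qfS -(IH k Hk) -!mulrA; congr (_ * (_ * _)); exact: mulrC.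
have T2 : qbinom n k.+1 * (qf k.+1 * qf (n - k)) = qf n * ('X^(n - k) - 1).
  have [lt_kn|->] : (k < n)%N \/ k = n.
    by move: Hk; rewrite ltnS leq_eqVlt => /orP[/eqP->|]; [right|left].
    have -> : (n - k = (n - k.+1).+1)%N by rewrite subnSK.
    by rewrite (qfS (n - k.+1)) -(IH k.+1 lt_kn) !mulrA.
  by rewrite subnn expr0 subrr !mulr0 qbinom_gt ?mul0r.
rewrite mulrDl -mulrA T2 T1 qfS -mulrCA -mulrDr; congr (_ * _).
rewrite mulrBr mulr1 -exprD addrC addrA subrK.
by rewrite addSn subnKC.
Qed.

Lemma qbinom1 n k : (qbinom n k).[1] = ('C(n, k))%:R.
Proof.
elim: n k => [|n IH] [|k] /=; rewrite ?hornerE //.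
by rewrite !IH expr1n mul1r binS natrD addrC.
Qed.

Definition ee (n d k : nat) : bool := (0 < d)%N && (d <= k %% d + (n - k) %% d)%N.

Lemma divn_split n d k : (k <= n)%N -> (n %/ d = k %/ d + (n - k) %/ d + ee n d k)%N.
Proof.
move=> Hk; case: (posnP d) => [->|d0]; first by rewrite !divn0.
by rewrite /ee d0 /= -{1}(subnKC Hk) divnD.
Qed.

Lemma prod_ord_divisors (R : comNzRingType) N m (f : nat -> R) : (0 < m)%N -> (m < N)%N ->
  \prod_(d < N | (d %| m)%N) f d = \prod_(d <- divisors m) f d.
Proof.
move=> m0 mN; rewrite -(big_mkord (fun d => d %| m)%N f) -big_filter; apply: perm_big; apply: uniq_perm.
- by rewrite filter_uniq // iota_uniq.
- exact: divisors_uniq.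
move=> d; rewrite mem_filter mem_iota -dvdn_divisors // add0n /=.
case dm: (d %| m)%N; rewrite ?andbF ?andbT //= subn0; exact: leq_ltn_trans (dvdn_leq m0 dm) mN.
Qed.

Definition F (N m : nat) : {poly int} := \prod_(d < N) 'Phi_d ^+ (m %/ d).

Lemma F_qf N m : (m < N)%N -> F N m = qf m.
Proof.
elim: m => [|m IH] mN.
  by rewrite /F /qf big_ord0 big1 // => d _; rewrite div0n expr0.
rewrite qfS -IH ?(ltnW mN) //.
have -> : F N m.+1 = F N m * \prod_(d < N | (d %| m.+1)%N) 'Phi_d.
  rewrite /F [X in _ * X]big_mkcond -big_split /=; apply: eq_bigr => d _.
  case: (posnP d) => [->|d0]; first by rewrite !divn0 Cyclotomic0 expr0 mul1r; case: (0 %| m.+1)%N.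
  by rewrite divnS // exprD mulrC; case: (d %| m.+1)%N; rewrite ?expr1 ?expr0.
by rewrite prod_ord_divisors // prod_Cyclotomic.
Qed.

Definition E (n k : nat) : {poly int} := \prod_(d < n.+1 | ee n d k) 'Phi_d.

Lemma F_neq0 N m : F N m != 0.
Proof.
apply: monic_neq0; apply: monic_prod => d _; apply: monic_exp; exact: Cyclotomic_monic.
Qed.

Lemma qbinom_E n k : (k <= n)%N -> qbinom n k = E n k.
Proof.
move=> Hk; have H := QB n k Hk.
have kN : (k < n.+1)%N by [].
have kN' : (n - k < n.+1)%N by rewrite ltnS leq_subr.
rewrite -(F_qf _ _ kN) -(F_qf _ _ kN') -(F_qf _ _ (ltnSn n)) in H.
have HF : F n.+1 n = E n k * (F n.+1 k * F n.+1 (n - k)).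
  rewrite /F /E [X in _ = X * _]big_mkcond -!big_split /=; apply: eq_bigr => d _.
  by rewrite (divn_split n d k Hk) !exprD mulrC; case: (ee n d k); rewrite ?expr1 ?expr0.
apply: (mulIf (mulf_neq0 (F_neq0 n.+1 k) (F_neq0 n.+1 (n - k)))).
by rewrite /= H HF.
Qed.

Definition inD (n d : nat) : bool := [exists k : 'I_n.+1, ee n d k].

Definition Lq (n : nat) : {poly int} := \prod_(d < n.+1 | inD n d) 'Phi_d.

Lemma Lq_split n k : (k <= n)%N ->
  Lq n = E n k * \prod_(d < n.+1 | inD n d && ~~ ee n d k) 'Phi_d.
Proof.
move=> Hk; rewrite /Lq (bigID (fun d : 'I_n.+1 => ee n d k)) /=; congr (_ * _).
apply: eq_bigl => d; case e: (ee n d k); rewrite ?andbF ?andbT //.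
by apply/existsP; exists (Ordinal (Hk : (k < n.+1)%N)).
Qed.

Lemma Lq_monic n : Lq n \is monic.
Proof. by apply: monic_prod => d _; apply: Cyclotomic_monic. Qed.

Notation pZC := (map_poly (intr : int -> algC)).

Lemma transfer (L M : {poly int}) : L \is monic -> pZC L %| pZC M -> zpoly_dvd L M.
Proof.
move=> mL dv; have DM := Pdiv.IdomainMonic.divp_eq mL M.
suff r0 : M %% L = 0 by exists (M %/ L)%R; rewrite {1}DM r0 addr0 mulrC.
have sr : (size (M %% L)%R < size L)%N by rewrite ltn_modp monic_neq0.
have Dr : M %% L = M - M %/ L * L by rewrite {2}DM addrC addKr.
have dvr : pZC L %| pZC (M %% L).
  by rewrite Dr rmorphB rmorphM /=; apply: dvdp_sub dv (dvdp_mull _ (dvdpp _)).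
case: (eqVneq (M %% L) 0) => // nz.
have nz' : pZC (M %% L) != 0.
  by rewrite -size_poly_eq0 size_map_inj_poly ?size_poly_eq0 //; exact: intr_inj.
have := dvdp_leq nz' dvr.
rewrite !size_map_inj_poly //; try exact: intr_inj.
by rewrite leqNgt sr.
Qed.

Lemma PhiC_root d x : (0 < d)%N -> root (pZC 'Phi_d) x = d.-primitive_root x.
Proof.
move=> d0; have [z pz] := C_prim_root_exists d0.
by rewrite (Cintr_Cyclotomic pz) (root_cyclotomic pz).
Qed.

Lemma prim_uniq (d e : nat) (x : algC) : d.-primitive_root x -> e.-primitive_root x -> d = e.
Proof.
move=> pd pe; apply/eqP; rewrite eqn_dvd (prim_order_dvd pd) (prim_expr_order pe) eqxx.
by rewrite (prim_order_dvd pe) (prim_expr_order pd) eqxx.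
Qed.

Lemma prod_dvd (s : seq nat) (P : pred nat) (M : {poly algC}) :
  uniq s -> (forall d, d \in s -> P d -> (0 < d)%N /\ pZC 'Phi_d %| M) ->
  \prod_(d <- s | P d) pZC 'Phi_d %| M.
Proof.
elim: s => [|a s IH] /=; first by rewrite big_nil dvd1p.
move=> /andP[nas us] H; rewrite big_cons.
have Hs : forall d, d \in s -> d \in a :: s by move=> d ds; rewrite inE ds orbT.
have IH' := IH us (fun d ds Pd => H d (Hs d ds) Pd).
case Pa: (P a) => //.
have [a0 dva] := H a (mem_head _ _) Pa.
rewrite Gauss_dvdp ?dva ?IH' //.
apply: Pdiv.ClosedField.root_coprimep => x rx.
rewrite horner_prod prodf_seq_neq0; apply/allP => e es; apply/implyP => Pe.
have [e0 _] := H e (Hs e es) Pe.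
apply/negP => /eqP re.
have : root (pZC 'Phi_e) x by rewrite /root re.
rewrite PhiC_root // => pe; rewrite PhiC_root // in rx.
by move: nas; rewrite (prim_uniq _ _ _ rx pe) es.
Qed.

Lemma zdvd_map (p q : {poly int}) : zpoly_dvd p q -> pZC p %| pZC q.
Proof. by case=> s ->; rewrite rmorphM /= dvdp_mulIl. Qed.

Lemma ee_gt1 n d k : ee n d k -> (1 < d)%N.
Proof.
case/andP; case: d => [|[|d]] //= _; by rewrite !modn1.
Qed.

Lemma Phi_dvd_E n d k : ee n d k -> (d < n.+1)%N -> zpoly_dvd 'Phi_d (E n k).
Proof.
move=> e dn; exists (\prod_(i < n.+1 | ee n i k && (i != Ordinal dn)) 'Phi_i).
by rewrite /E (bigD1 (Ordinal dn)).
Qed.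

Lemma Lq_lcm n M : (forall k : 'I_n.+1, zpoly_dvd (qbinom n k) M) -> zpoly_dvd (Lq n) M.
Proof.
move=> H; apply: transfer; first exact: Lq_monic.
rewrite /Lq rmorph_prod /= -(big_mkord (inD n) (fun d => pZC 'Phi_d)).
apply: prod_dvd; first exact: iota_uniq.
move=> d; rewrite mem_index_iota => /andP[_ dn] /existsP[k e]; split.
  by apply: ltnW; exact: ee_gt1 e.
apply: dvdp_trans (zdvd_map _ _ (Phi_dvd_E _ _ _ e dn)) _.
rewrite -qbinom_E; last by rewrite -ltnS.
exact: zdvd_map.
Qed.

Lemma XnsubC_neq0 a : (0 < a)%N -> ('X^a - 1 : {poly int}) != 0.
Proof. by move=> a0; rewrite -polyC1 monic_neq0 // monicXnsubC. Qed.

Lemma Phi1 : 'Phi_1 = 'X - 1.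
Proof.
have := prod_Cyclotomic (ltn0Sn 0).
have -> : divisors 1 = [:: 1%N] by [].
by rewrite big_seq1 expr1.
Qed.

Lemma sum1 r : (\sum_(i < r) ('X : {poly int}) ^+ i).[1] = r%:R.
Proof.
rewrite horner_sum (eq_bigr (fun _ => 1)); last by move=> i _; rewrite hornerXn expr1n.
by rewrite sumr_const card_ord.
Qed.

Lemma prodPhi1 m : (0 < m)%N ->
  \prod_(d <- divisors m | d != 1%N) ('Phi_d).[1] = m%:R :> int.
Proof.
move=> m0; have H := prod_Cyclotomic m0.
rewrite (bigD1_seq 1%N) ?divisors_uniq -?dvdn_divisors ?dvd1n // Phi1 in H.
rewrite (subrX1 'X m) in H.
have nz : ('X - 1 : {poly int}) != 0 by rewrite -polyC1 monic_neq0 // monicXsubC.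
by rewrite -horner_prod (mulfI nz H) sum1.
Qed.

Lemma Phi1_pos d : (1 < d)%N -> 0 < ('Phi_d).[1].
Proof.
elim/ltn_ind: d => d IH d1.
have d0 : (0 < d)%N by apply: ltnW.
have H := prodPhi1 d d0.
rewrite -big_filter (bigD1_seq d) ?filter_uniq ?divisors_uniq // in H; last first.
  by rewrite mem_filter -dvdn_divisors // dvdnn neq_ltn d1 orbT.
set P := \big[_/_]_(i <- _ | _) _ in H.
have pos : 0 < P.
  rewrite /P big_seq_cond; apply: prodr_gt0 => e /andP[].
  rewrite mem_filter -dvdn_divisors // => /andP[e1 ed] ne.
  have e0 : (0 < e)%N by case: e ed {e1 ne} => //; rewrite dvd0n => /eqP d00; move: d0; rewrite d00.
  apply: IH; first by rewrite ltn_neqAle ne dvdn_leq.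
  by rewrite ltn_neqAle eq_sym e1.
by rewrite -(pmulr_lgt0 _ pos) H ltr0n.
Qed.

Lemma Phi1_coprime p d : prime p -> (1 < d)%N -> (d`_p)%N != d ->
  coprime p `|('Phi_d).[1]|.
Proof.
move=> pp d1 ndp.
have d0 : (0 < d)%N by apply: ltnW.
set a := (d`_p)%N; set r := (d`_p^')%N.
have a0 : (0 < a)%N := part_gt0 _ _.
have Dd : d = (a * r)%N by rewrite partnC.
have ad : (a %| d)%N by rewrite Dd dvdn_mulr.
have H := prod_Cyclotomic d0.
rewrite (bigID (fun e => e %| a)%N) /= in H.
have E1 : \prod_(e <- divisors d | (e %| a)%N) 'Phi_e = \prod_(e <- divisors a) 'Phi_e.
  rewrite -big_filter; apply: perm_big; apply: uniq_perm.
  - by rewrite filter_uniq ?divisors_uniq.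
  - exact: divisors_uniq.
  move=> e; rewrite mem_filter -!dvdn_divisors //.
  by apply/andP/idP => [[]//|ea]; split=> //; apply: dvdn_trans ad.
rewrite E1 prod_Cyclotomic // {2}Dd exprM (subrX1 ('X^a) r) in H.
set Q := \big[_/_]_(i <- _ | _) _ in H.
have HQ := mulfI (XnsubC_neq0 _ a0) H.
have Qd : zpoly_dvd 'Phi_d Q.
  rewrite /Q -big_filter (bigD1_seq d) ?filter_uniq ?divisors_uniq //; first by eexists.
  rewrite mem_filter -dvdn_divisors // dvdnn andbT.
  apply/negP => da; move: ndp; rewrite -/a.
  by rewrite eqn_dvd da ad.
case: Qd => s Ds.
have : Q.[1] = r%:R.
  rewrite HQ horner_sum (eq_bigr (fun _ => 1)); last by move=> i _; rewrite -exprM hornerXn expr1n.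
  by rewrite sumr_const card_ord.
rewrite Ds hornerM => /(congr1 absz); rewrite abszM => Er.
rewrite natz absz_nat in Er.
have : (`|('Phi_d).[1]| %| r)%N by rewrite -Er dvdn_mulr.
move/coprime_dvdr; apply.
rewrite prime_coprime // -p'natE //; exact: part_pnat.
Qed.

Lemma modn_pred d k : (0 < d)%N -> (d %| k.+1)%N -> (k %% d = d.-1)%N.
Proof.
move=> d0 /dvdnP[q Dq].
case: q Dq => [|q] Dq; first by move: Dq; rewrite mul0n.
have -> : k = (q * d + d.-1)%N.
  apply: succn_inj; rewrite Dq mulSn addnC -addnS prednK //.
by rewrite modnMDl modn_small // prednK.
Qed.

Lemma carry n d k : (0 < d)%N -> (k <= n)%N -> (d %| k.+1)%N -> ~~ (d %| n.+1)%N -> ee n d k.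
Proof.
move=> d0 kn dk dn; rewrite /ee d0 /= (modn_pred d k d0 dk).
have x0 : (0 < (n - k) %% d)%N.
  rewrite lt0n; apply: contra dn => /eqP h.
  have : (d %| (n - k) + k.+1)%N by rewrite dvdn_add // /dvdn h.
  by rewrite addnS subnK.
by rewrite -{1}(prednK d0) -addn1 leq_add2l.
Qed.

Lemma inD_ndvd n d : inD n d -> ~~ (d %| n.+1)%N.
Proof.
move=> /existsP[k /andP[d0 hs]]; apply/negP => dn.
have kn : (k <= n)%N by rewrite -ltnS.
have := modn_pred d n d0 dn.
rewrite -{1}(subnKC kn) modnD // hs mul1n.
have h1 := ltn_pmod k d0; have h2 := ltn_pmod (n - k) d0.
move: h1 h2 hs; set a := (k %% d)%N; set b := ((n - k) %% d)%N.
move=> /ssrnat.ltP h1 /ssrnat.ltP h2 /ssrnat.leP h3 h4; move: h1 h2 h3 h4.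
rewrite -subn1 -?plusE -?minusE; lia.
Qed.

Lemma prod_abs n (P : pred 'I_n.+1) : (forall d : 'I_n.+1, P d -> (1 < d)%N) ->
  (\prod_(d < n.+1 | P d) 'Phi_d).[1] = (\prod_(d < n.+1 | P d) `|('Phi_d).[1]|%N)%:Z.
Proof.
move=> H; rewrite horner_prod (big_morph Posz PoszM (erefl _)).
by apply: eq_bigr => d Pd; rewrite gtz0_abs // Phi1_pos // H.
Qed.

Definition V (n : nat) : nat := \prod_(d < n.+1 | inD n d) `|('Phi_d).[1]|%N.

Lemma inD_gt1 n d : inD n d -> (1 < d)%N.
Proof. by case/existsP => k; apply: ee_gt1. Qed.

Lemma V_split n k : (k <= n)%N ->
  V n = ('C(n, k) * \prod_(d < n.+1 | inD n d && ~~ ee n d k) `|('Phi_d).[1]|%N)%N.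
Proof.
move=> Hk; apply/eqP; rewrite -eqz_nat PoszM -prod_abs; last first.
  by move=> d /andP[/inD_gt1].
rewrite -prod_abs; last by move=> d; apply: inD_gt1.
by rewrite -/(Lq n) (Lq_split n k Hk) hornerM -(qbinom_E n k Hk) qbinom1 natz.
Qed.

Lemma V_gt0 n : (0 < V n)%N.
Proof.
rewrite /V big_mkcond /=; apply: prodn_gt0 => d; case: ifP => // /inD_gt1 d1.
by rewrite absz_gt0 gt_eqF // Phi1_pos.
Qed.

Lemma binom_dvd_V n : (binom_lcm n %| V n)%N.
Proof.
apply/dvdn_biglcmP => k _.
by rewrite (V_split n k) ?dvdn_mulr // -ltnS.
Qed.

Lemma V_dvd_binom n : (0 < n)%N -> (V n %| binom_lcm n)%N.
Proof.
move=> n0; apply/(dvdn_partP _ (V_gt0 n)) => p pV.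
have : p \in primes (V n) := pV.
rewrite mem_primes => /and3P[pp _ _].
have p1 : (1 < p)%N := prime_gt1 pp.
set J := trunc_log p n; set k := (p ^ J).-1.
have pJ0 : (0 < p ^ J)%N by rewrite expn_gt0 ltnW.
have k1 : k.+1 = (p ^ J)%N by rewrite prednK.
have kn : (k <= n)%N.
  by apply: ltnW; rewrite k1 trunc_logP.
set W := (\prod_(d < n.+1 | inD n d && ~~ ee n d k) `|('Phi_d).[1]|)%N.
have cW : coprime p W.
  apply: (big_ind (coprime p)) => [|x y|d /andP[dD ne]]; first exact: coprimen1.
    by move=> cx cy; rewrite coprimeMr cx cy.
  have d1 := inD_gt1 n d dD.
  apply: Phi1_coprime => //; apply/negP => /eqP dp.
  move/negP: ne; apply; apply: carry.
  - exact: ltnW.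
  - by rewrite -ltnS.
  - rewrite k1 -dp p_part; apply: dvdn_exp2l; apply: trunc_log_max => //.
    by rewrite -p_part dp -ltnS.
  - exact: inD_ndvd.
have h : ((V n)`_p %| 'C(n, k) * W)%N by rewrite -(V_split n k kn) dvdn_part.
rewrite Gauss_dvdl in h; last by rewrite p_part coprimeXl.
apply: dvdn_trans h _.
have kn' : (k < n.+1)%N by [].
exact: (biglcmn_sup (Ordinal kn')).
Qed.

Lemma Lq_is_lcm n : is_qbinom_lcm n (Lq n).
Proof.
split; last exact: Lq_lcm.
move=> k; have kn : (k <= n)%N by rewrite -ltnS.
by rewrite (qbinom_E n k kn) (Lq_split n k kn); eexists.
Qed.

Lemma Lq_lead n : lead_coef (Lq n) = 1.
Proof. exact/monicP/Lq_monic. Qed.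

Lemma Lq_at1 n : (Lq n).[1] = (V n)%:Z.
Proof. by rewrite /Lq prod_abs // => d; apply: inD_gt1. Qed.

Theorem mainTheorem5 (n : nat) (hn : (0 < n)%N) :
  (exists L : {poly int}, is_qbinom_lcm n L /\ 0 < lead_coef L) /\
  (forall L : {poly int}, is_qbinom_lcm n L -> 0 < lead_coef L ->
     L.[1] = (binom_lcm n)%:Z).
Proof.
split; first by exists (Lq n); rewrite Lq_lead; split=> //; exact: Lq_is_lcm.
move=> L [HL1 HL2] lp.
have [HQ1 HQ2] := Lq_is_lcm n.
have [s Ds] := HQ2 L HL1.
have [t Dt] := HL2 (Lq n) HQ1.
have nzQ : Lq n != 0 by apply: monic_neq0; apply: Lq_monic.
have st1 : s * t = 1.
  apply: (mulfI nzQ); rewrite mulr1 mulrA -Ds -Dt //.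
have s0 : s != 0 by apply: contra_eq_neq st1 => ->; rewrite mul0r eq_sym oner_neq0.
have t0 : t != 0 by apply: contra_eq_neq st1 => ->; rewrite mulr0 eq_sym oner_neq0.
have ss : size s = 1%N.
  have := congr1 (fun p : {poly int} => size p) st1; rewrite /= size_mul // size_poly1.
  have := size_poly_gt0 s; have := size_poly_gt0 t; rewrite s0 t0.
  by case: (size s) => [|[|a]] //; case: (size t) => [|[|b]] //; rewrite addnS.
have Dsc : s = (s`_0)%:P by apply: size1_polyC; rewrite ss.
have ls : lead_coef s = 1.
  have l1 := congr1 lead_coef st1; rewrite lead_coefM lead_coef1 in l1.
  have lsp : 0 < lead_coef s by move: lp; rewrite Ds lead_coefM Lq_lead mul1r.
  have := congr1 absz l1; rewrite abszM => /eqP; rewrite muln_eq1 => /andP[/eqP h _].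
  by rewrite -[lead_coef s]gtz0_abs // h.
have s00 : s`_0 = 1 by rewrite -ls lead_coefE ss.
have -> : L = Lq n by rewrite Ds Dsc s00 mulr1.
rewrite Lq_at1; congr Posz; apply/eqP; by rewrite eqn_dvd binom_dvd_V V_dvd_binom.
Qed.
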